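(* Let $G$ be a connected threshold graph of order $n\ge 4$ and size $m$ with $n-1<m<\binom{n}{2}$, let $c$ be its number of type 1 vertices, $(b_1,\ldots,b_z)$ its backwards zero position sequence, $F_1=\sum_{i=1}^z b_i^2$, and $\rho$ the spectral radius of its adjacency matrix. Then \[\rho> c-1+\frac{F_1}{n^2}.\]
   Context: A threshold graph is a simple graph whose vertices can be ordered $v_1,\ldots,v_n$ so that for each $2\le i\le n$, $v_i$ is either adjacent to all of $v_1,\ldots,v_{i-1}$ (then $a_i=1$) or to none of them (then $a_i=0$); by convention $a_1=1$. Vertex $v_i$ is of type 1 if $a_i=1$ and of type 0 if $a_i=0$; $c$ and $z$ are the numbers of type 1 and type 0 vertices. The backwards zero position sequence $(b_1,\ldots,b_z)$ is defined by letting $b_i$ be the number of type 1 vertices appearing after the $i$-th type 0 vertex in the order $v_1,\ldots,v_n$. *)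

(* Defs.v *)
From mathcomp Require Import all_boot all_order all_algebra all_field.
Set Implicit Arguments. Unset Strict Implicit. Unset Printing Implicit Defensive.
Import Order.TTheory GRing.Theory Num.Theory.
Local Open Scope ring_scope.

(* A threshold graph on the vertex set 'I_n, with vertex i playing the role of
   v_(i+1) in the creation ordering, described by its creation sequence
   a : nat -> bool (a i = a_(i+1); only a 0, ..., a (n-1) matter). *)
Definition th_adj (n : nat) (a : nat -> bool) : rel 'I_n :=
  fun i j => (i != j) && a (maxn i j).

Definition th_adjmx (n : nat) (a : nat -> bool) : 'M[algC]_n :=
  \matrix_(i, j) (if th_adj a i j then 1 else 0 : algC).

Definition th_size (n : nat) (a : nat -> bool) : nat :=
  #|[set p : 'I_n * 'I_n | (p.1 < p.2)%N && th_adj a p.1 p.2]|.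

Definition th_connected (n : nat) (a : nat -> bool) : Prop :=
  forall i j : 'I_n, connect (th_adj a) i j.

Definition th_c (n : nat) (a : nat -> bool) : nat := count a (iota 0 n).

Definition th_bzps (n : nat) (a : nat -> bool) : seq nat :=
  [seq count a (iota i.+1 (n - i.+1)) | i <- [seq i <- iota 0 n | ~~ a i]].

Definition th_F1 (n : nat) (a : nat -> bool) : nat :=
  sumn [seq (b ^ 2)%N | b <- th_bzps n a].

Definition spectral_radius (n : nat) (A : 'M[algC]_n) (r : algC) : Prop :=
  (exists2 l, eigenvalue A l & `|l| = r) /\
  (forall l, eigenvalue A l -> `|l| <= r).

(* Main.v *)
Require Import Defs.
From mathcomp Require Import all_boot all_order all_algebra all_field zify ring.
Import Order.TTheory GRing.Theory Num.Theory Num.Def.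

Lemma count_sum n (a : nat -> bool) m :
  count a (iota m (n - m)) = \sum_(k < n | m <= k) (a k : nat).
Proof.
rewrite -sum1_count big_mkcond /= -/(index_iota m n) big_geq_mkord.
apply: eq_big => // i _; by case: (a i).
Qed.

Definition bj n (a : nat -> bool) (j : nat) : nat := \sum_(k < n | j < k) (a k : nat).

Lemma c_sum n a : th_c n a = \sum_(k < n) (a k : nat).
Proof. rewrite /th_c -{1}(subn0 n) count_sum; apply: eq_bigl => i; by []. Qed.

Lemma F1_sum n a : th_F1 n a = \sum_(j < n | ~~ a j) (bj n a j) ^ 2.
Proof.
rewrite /th_F1 /th_bzps -map_comp sumnE big_map big_filter.
rewrite -/(index_iota 0 n) -{1}(subn0 n) big_mkord.
apply: eq_bigr => i _ /=; rewrite count_sum; by [].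
Qed.

Lemma all_pairs n : \sum_(i < n) \sum_(j < n) ((i < j)%N : nat) = 'C(n, 2).
Proof.
elim: n => [|n IH]; first by rewrite big_ord0.
rewrite big_ord_recr /=.
rewrite (eq_bigr (fun i : 'I_n => \sum_(j < n) ((i < j)%N : nat) + 1)); last first.
  by move=> i _; rewrite big_ord_recr /= ltn_ord.
rewrite big_split /= IH sum_nat_const card_ord muln1.
rewrite big1; last by move=> j _; rewrite ltnNge -ltnS ltn_ord.
by rewrite binS bin1 addn0.
Qed.

Lemma size_full n (a : nat -> bool) : (forall i : 'I_n, a i) -> th_size n a = 'C(n, 2).
Proof.
move=> h; rewrite /th_size -all_pairs -sum1_card pair_big /= big_mkcond /=.
apply: eq_bigr => -[i j] _ /=; rewrite inE /= /th_adj.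
case: (ltnP i j) => //= lij.
have -> : i != j by apply/eqP => E; move: lij; rewrite E ltnn.
by rewrite h.
Qed.

Lemma last_one n (a : nat -> bool) : (2 <= n)%N -> th_connected n a -> a n.-1.
Proof.
move=> n2 hc; apply/negP => hn.
have l0 : (0 < n)%N by lia.
have l1 : (n.-1 < n)%N by lia.
have /connectP [p pth plast] := hc (Ordinal l1) (Ordinal l0).
case: p pth plast => [|q p] /=.
  by move=> _ /(congr1 val) /=; lia.
case/andP => hq _ _; move: hq; rewrite /th_adj /= => /andP [_].
have -> : maxn n.-1 q = n.-1 by apply/maxn_idPl; move: (ltn_ord q); lia.
by move=> h; apply: hn.
Qed.

Lemma split_sq n (f : 'I_n -> 'I_n -> nat) :
  \sum_(i < n) \sum_(k < n) f i k = \sum_(i < n) f i i + \sum_(i < n) \sum_(k < n | (i < k)%N) f i k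
                         + \sum_(i < n) \sum_(k < n | (i < k)%N) f k i.
Proof.
have E : forall i : 'I_n, \sum_(k < n) f i k =
    f i i + \sum_(k < n | (i < k)%N) f i k + \sum_(k < n | (k < i)%N) f i k.
  move=> i; rewrite (bigD1 i) //= (bigID (fun k : 'I_n => (i < k)%N)) /= addnA; congr (_ + _ + _).
    apply: eq_bigl => k; case: ltngtP => // h; rewrite ?andbT ?andbF //.
    by apply/eqP => E; move: h; rewrite E ltnn.
  apply: eq_bigl => k; case: ltngtP => // h; rewrite ?andbT ?andbF //.
    by apply/eqP => E; move: h; rewrite E ltnn.
  by rewrite (val_inj h) eqxx.
rewrite (eq_bigr _ (fun i _ => E i)) !big_split /=; congr (_ + _).
by rewrite (exchange_big_dep xpredT).
Qed.

Lemma cc_sum n (a : nat -> bool) :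
  th_c n a * th_c n a = th_c n a + 2 * \sum_(i < n) a i * bj n a i.
Proof.
rewrite c_sum big_distrl /=.
rewrite (eq_bigr (fun i : 'I_n => \sum_(k < n) (a i * a k))); last first.
  by move=> i _; rewrite big_distrr.
rewrite split_sq -addnA; congr (_ + _).
  by apply: eq_bigr => i _; case: (a i).
rewrite mul2n -addnn; congr (_ + _); apply: eq_bigr => i _;
  rewrite /bj big_distrr //=; apply: eq_bigr => k _; by rewrite mulnC.
Qed.

Definition ww n (a : nat -> bool) (j : nat) : nat :=
  if a j then (th_c n a).-1 else bj n a j.

Lemma adj_lt n a (i k : 'I_n) : (i < k)%N -> th_adj a i k = a k /\ th_adj a k i = a k.
Proof.
move=> h; have ne : i != k by apply/eqP => E; move: h; rewrite E ltnn.
rewrite /th_adj ne eq_sym ne /= (maxn_idPr (ltnW h)) (maxn_idPl (ltnW h)); by [].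
Qed.

Lemma Q_sum n (a : nat -> bool) :
  \sum_(i < n) \sum_(k < n) ww n a i * th_adj a i k * ww n a k =
  2 * (th_c n a).-1 * ((th_c n a).-1 * \sum_(i < n) a i * bj n a i + th_F1 n a).
Proof.
set K := (th_c n a).-1.
rewrite split_sq big1 ?add0n; last by move=> i _; rewrite /th_adj eqxx /= muln0 mul0n.
have E : forall i : 'I_n, \sum_(k < n | (i < k)%N) ww n a i * th_adj a i k * ww n a k
   = ww n a i * K * bj n a i.
  move=> i; rewrite /bj big_distrr /=; apply: eq_bigr => k h.
  have [-> _] := adj_lt n a i k h; rewrite /ww; case: (a k) => /=; lia.
have E2 : forall i : 'I_n, \sum_(k < n | (i < k)%N) ww n a k * th_adj a k i * ww n a i
   = ww n a i * K * bj n a i.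
  move=> i; rewrite -(E i); apply: eq_bigr => k h.
  have [-> ->] := adj_lt n a i k h; lia.
rewrite (eq_bigr _ (fun i _ => E i)) (eq_bigr _ (fun i _ => E2 i)) addnn -mul2n -mulnA.
congr (_ * _).
rewrite (eq_bigr (fun i : 'I_n => K * (ww n a i * bj n a i))); last by move=> i _; lia.
rewrite -big_distrr /=; congr (_ * _).
rewrite F1_sum big_distrr /= [X in _ = _ + X]big_mkcond /= -big_split /=.
apply: eq_bigr => i _; rewrite /ww; case: (a i) => /=; lia.
Qed.

Lemma N_sum n (a : nat -> bool) :
  \sum_(i < n) ww n a i ^ 2 = th_c n a * (th_c n a).-1 ^ 2 + th_F1 n a.
Proof.
rewrite F1_sum {1}c_sum big_distrl /= [X in _ = _ + X]big_mkcond /= -big_split /=.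
apply: eq_bigr => i _; rewrite /ww; case: (a i) => /=; lia.
Qed.

Lemma bj_le n (a : nat -> bool) (j : nat) : a 0 -> ~~ a j -> bj n a j <= (th_c n a).-1.
Proof.
move=> a0 aj; rewrite c_sum /bj big_mkcond /=.
case: n => [|n]; first by rewrite !big_ord0.
rewrite big_ord_recl /= add0n big_ord_recl /= a0 add1n /=.
apply: leq_sum => k _; case: (j < _)%N => //.
Qed.

Lemma cz n (a : nat -> bool) : th_c n a + \sum_(j < n | ~~ a j) 1 = n.
Proof.
rewrite c_sum [X in _ + X = _]big_mkcond -big_split /=.
rewrite (eq_bigr (fun _ => 1)) ?sum_nat_const ?card_ord ?muln1 //.
by move=> i _; case: (a i).
Qed.

Lemma F1_le n (a : nat -> bool) : a 0 ->
  th_F1 n a <= (n - th_c n a) * (th_c n a).-1 ^ 2.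
Proof.
move=> a0; have E := cz n a.
have -> : n - th_c n a = \sum_(j < n | ~~ a j) 1 by lia.
rewrite F1_sum big_distrl /=.
apply: leq_sum => j aj; rewrite mul1n leq_exp2r //; exact: bj_le.
Qed.

Lemma F1_ge n (a : nat -> bool) (j0 : 'I_n) : ~~ a j0 -> a n.-1 ->
  1 <= bj n a j0 /\ 1 <= th_F1 n a.
Proof.
move=> aj an.
have l1 : (n.-1 < n)%N by move: (ltn_ord j0); lia.
have jl : (j0 < n.-1)%N.
  have : (j0 <= n.-1)%N by move: (ltn_ord j0); lia.
  rewrite leq_eqVlt => /orP [/eqP E|] //; by move: aj; rewrite E an.
have hb : 1 <= bj n a j0.
  rewrite /bj (bigD1 (Ordinal l1)) //= an; lia.
split => //; rewrite F1_sum (bigD1 j0) //=.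
have : 1 <= bj n a j0 ^ 2 by rewrite expn_gt0 hb.
lia.
Qed.

Lemma final_nat c F n P :
  1 <= c.-1 -> 1 <= F -> F <= (n - c) * c.-1 ^ 2 -> c <= n -> c * c = c + 2 * P ->
  (c.-1 * n ^ 2 + F) * (c * c.-1 ^ 2 + F) < 2 * c.-1 * (c.-1 * P + F) * n ^ 2.
Proof.
move=> K1 F1 Fle cn cc.
set K := c.-1 in K1 Fle *.
have cK : c = K + 1 by rewrite /K; lia.
set z := n - c in Fle.
have nz : n = c + z by rewrite /z; lia.
have P2 : 2 * P = K * c by rewrite cK in cc *; lia.
have e2 : 2 * K * (K * P + F) * n ^ 2 = K * K * K * c * n ^ 2 + (K * n ^ 2 * F + F * (K * n * n)).
  have -> : 2 * K * (K * P + F) = K * K * (2 * P) + 2 * K * F by ring.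
  rewrite P2; ring.
have e1 : (K * n ^ 2 + F) * (c * K ^ 2 + F) = K * K * K * c * n ^ 2 + (K * n ^ 2 * F + F * (K * K * c + F)) by ring.
rewrite e1 e2 ltn_add2l ltn_add2l.
have h1 : K * K * c + F <= K * K * n.
  have -> : K * K * n = K * K * c + z * K ^ 2 by rewrite nz; ring.
  by rewrite leq_add2l.
have h2 : K * K * n < K * n * n.
  have -> : K * K * n = K * n * K by ring.
  rewrite ltn_pmul2l; last by rewrite muln_gt0; apply/andP; split; lia.
  lia.
rewrite ltn_pmul2l; last by lia.
exact: leq_ltn_trans h1 h2.
Qed.

Local Open Scope ring_scope.
Local Open Scope sesquilinear_scope.

Lemma rayleigh n (A : 'M[algC]_n) (rho : algC) (x : 'rV[algC]_n) :
  A \is hermsymmx -> x ^ conjC = x ->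
  (forall l, eigenvalue A l -> `|l| <= rho) ->
  (x *m A *m x^T) 0 0 <= rho * (x *m x^T) 0 0.
Proof.
move=> Ah xr hrho.
have /orthomx_spectralP Ae := hermitian_normalmx Ah.
set P := spectralmx A in Ae; set d := spectral_diag A in Ae.
have Pu : P \is unitarymx by apply: spectral_unitarymx.
have Punit : P \in unitmx by apply: spectral_unit.
have PtP : P^t* *m P = 1%:M by apply: mulmx1C; apply/unitarymxP.
have dreal : d \is a realmx by apply: hermitian_spectral_diag_real.
have deig : forall j, eigenvalue A (d 0 j).
  move=> j; apply/eigenvalueP; exists (row j P).
    rewrite -row_mul Ae !mulmxA mulmxV // mul1mx row_mul row_diag_mx -scalemxAl.
    by rewrite rowE.
  apply/negP=> /eqP h; have := mulmxK Punit (delta_mx 0 j : 'rV_n).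
  rewrite -rowE h mul0mx => /matrixP /(_ 0 j); rewrite !mxE !eqxx /=.
  by move=> /esym/eqP; rewrite oner_eq0.
set y := x *m P^t*.
have yT : y^t* = P *m x^T.
  by rewrite /y trmx_mul map_mxM trmxCK -map_trmx xr.
have e1 : x *m A *m x^T = y *m diag_mx d *m y^t*.
  by rewrite yT Ae invmx_unitary // /y !mulmxA.
have e2 : x *m x^T = y *m y^t*.
  by rewrite yT /y !mulmxA -(mulmxA x) PtP mulmx1.
rewrite e1 e2; clearbody y; rewrite mul_mx_diag !mxE mulr_sumr; apply: ler_sum => k _.
rewrite !mxE mulrAC [X in _ <= X]mulrC.
have h0 : 0 <= y 0 k * (y 0 k)^*  by rewrite -normCK exprn_ge0.
apply: ler_wpM2l => //.
apply: le_trans (hrho _ (deig k)).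
apply: real_ler_norm. exact: (mxOverP dreal).
Qed.

Lemma adj_herm n (a : nat -> bool) : th_adjmx n a \is hermsymmx.
Proof.
apply: realsym_hermsym.
  apply/is_hermitianmxP; rewrite expr0 scale1r; apply/matrixP => i j.
  by rewrite !mxE /th_adj eq_sym maxnC.
by apply/mxOverP => i j; rewrite mxE; case: ifP.
Qed.

Lemma quad_form n (a : nat -> bool) (w : nat -> nat) :
  let x := \row_(j < n) ((w j)%:R : algC) in
  (x *m th_adjmx n a *m x^T) 0 0 =
    (\sum_(i < n) \sum_(k < n) w i * th_adj a i k * w k)%:R /\
  (x *m x^T) 0 0 = (\sum_(i < n) w i ^ 2)%:R.
Proof.
move=> x; split.
  rewrite !mxE natr_sum (eq_bigr (fun k : 'I_n => \sum_(i < n) x 0 i * th_adjmx n a i k * x 0 k)); last first.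
    by move=> k _; rewrite !mxE mulr_suml; apply: eq_bigr => i _; rewrite !mxE.
  rewrite exchange_big /=; apply: eq_bigr => i _; rewrite natr_sum; apply: eq_bigr => k _.
  rewrite !mxE !natrM; case: (th_adj a i k) => /=; by rewrite ?mulr1 ?mulr0 ?mul0r.
rewrite !mxE natr_sum; apply: eq_bigr => i _; rewrite !mxE natrX expr2 //.
Qed.

Theorem corollary4p4 (n : nat) (a : nat -> bool) (rho : algC) :
  a 0%N = true ->
  (4 <= n)%N ->
  th_connected n a ->
  (n.-1 < th_size n a)%N ->
  (th_size n a < 'C(n, 2))%N ->
  spectral_radius (th_adjmx n a) rho ->
  (th_c n a)%:R - 1 + (th_F1 n a)%:R / (n%:R ^+ 2) < rho.
Proof.
move=> a0 n4 hconn _ hsize [_ hrho].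
have an := last_one n a (leq_trans (isT : (2 <= 4)%N) n4) hconn.
have [j0 hj0] : exists j0 : 'I_n, ~~ a j0.
  case: (boolP [exists j : 'I_n, ~~ a j]) => [/existsP //|/existsPn h].
  have := size_full n a (fun i => negbNE (h i)).
  by move=> E; move: hsize; rewrite E ltnn.
have [b1 Fpos] := F1_ge n a j0 hj0 an.
have K1 : (1 <= (th_c n a).-1)%N := leq_trans b1 (bj_le n a j0 a0 hj0).
have cn : (th_c n a <= n)%N by have := cz n a; lia.
have Fle := F1_le n a a0.
have NAT := final_nat _ _ _ _ K1 Fpos Fle cn (cc_sum n a).
set c := th_c n a in K1 cn Fle NAT *.
set F := th_F1 n a in Fpos Fle NAT *.
set K := c.-1 in K1 Fle NAT.
set P := (\sum_(i < n) a i * bj n a i)%N in NAT.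
have [e1 e2] := quad_form n a (ww n a).
have xr : (\row_(j < n) ((ww n a j)%:R : algC)) ^ conjC = \row_(j < n) ((ww n a j)%:R : algC).
  by apply/matrixP => i j; rewrite !mxE conjC_nat.
have R := @rayleigh n (th_adjmx n a) rho _ (adj_herm n a) xr hrho; rewrite e1 e2 Q_sum N_sum -/c -/F -/K -/P in R.
set N := (c * K ^ 2 + F)%N in NAT R.
set S := (2 * K * (K * P + F))%N in NAT R.
have n0 : (n%:R : algC) ^+ 2 != 0 by rewrite expf_eq0 pnatr_eq0; lia.
have N0 : (0 : algC) < N%:R * n%:R ^+ 2.
  rewrite mulr_gt0 // ?ltr0n ?exprn_gt0 ?ltr0n; lia.
rewrite -(ltr_pM2r N0).
have cK : c = K.+1 by rewrite /K; lia.
have Tn : ((c%:R - 1 + F%:R / n%:R ^+ 2) * n%:R ^+ 2 : algC) = (K * n ^ 2 + F)%N%:R.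
  by rewrite mulrDl divfK // cK -addn1 natrD addrK natrD natrM natrX.
rewrite [X in X < _]mulrC -mulrA [n%:R ^+ 2 * _]mulrC Tn.
apply: (lt_le_trans (y := (S * n ^ 2)%N%:R)).
  by rewrite -natrM ltr_nat mulnC.
rewrite natrM natrX [rho * _]mulrA; apply: ler_wpM2r; first by rewrite exprn_ge0 // ler0n.
exact: R.
Qed.
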